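(* Consider the generative logic with $\mu\to1$ in the setting below. Let $\Omega$ and $\Delta$ be finite multisets of time-indexed formulas such that $E'(\Delta)=\emptyset$. Then $p(\Omega\mid\Delta)=p(\Omega)$.
   Context: Let $\mathcal{L}$ be a propositional language and let $K,T\ge1$. There are data sequences $d_1,\dots,d_K$; repetitions are allowed, and data are identified by their index $k$. Each $d_k$ is associated with a sequence of models $m(d_k)=(m(d_k)^1,\dots,m(d_k)^T)$ of $\mathcal{L}$. The prior is $p(d_k)=1/K$. A time-indexed formula is written $\alpha^t$, with $\alpha\in\mathcal{L}$ and $1\le t\le T$. Write $[\![\alpha^t]\!]_k=1$ if $\alpha$ is true in $m(d_k)^t$, and $0$ otherwise. For $\mu\in(0,1)$ and a finite multiset $X$ of time-indexed formulas, define $$p(X\mid d_k,\mu)=\prod_{\alpha^t\in X}\mu^{[\![\alpha^t]\!]_k}(1-\mu)^{1-[\![\alpha^t]\!]_k}.$$ Then define $$p(\Omega)=\lim_{\mu\to1}\sum_k p(\Omega\mid d_k,\mu)\,p(d_k)$$ and $$p(\Omega\mid\Delta)=\lim_{\mu\to1}\frac{\sum_k p(\Omega\mid d_k,\mu)\,p(\Delta\mid d_k,\mu)\,p(d_k)}{\sum_k p(\Delta\mid d_k,\mu)\,p(d_k)}.$$ An index $k$ is an evidence of $X$ if $[\![\alpha^t]\!]_k=1$ for all $\alpha^t\in X$. Let $E(X)$ be the set of such indices. $X$ is called founded if $E(X)\neq\emptyset$. Let $MFS(\Delta)$ be the set of nonempty founded sub-multisets $S\subseteq\Delta$ that have maximum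 cardinality among all nonempty founded sub-multisets of $\Delta$. Set $E'(\Delta)=\bigcup_{S\in MFS(\Delta)}E(S)$. This union is empty if $MFS(\Delta)=\emptyset$. Thus $E'(\Delta)=\emptyset$ iff no index is an evidence of any singleton of $\Delta$. *)

(* Defs.v *)
From HB Require Import structures.
From mathcomp Require Import all_boot all_order all_algebra.
From mathcomp Require Import all_classical all_reals all_analysis.
Set Implicit Arguments. Unset Strict Implicit. Unset Printing Implicit Defensive.
Import Order.TTheory GRing.Theory Num.Theory.
Import numFieldNormedType.Exports.
Local Open Scope classical_set_scope.
Local Open Scope ring_scope.

Inductive form (A : Type) : Type :=
  | FAtom of A
  | FBot
  | FNeg of form A
  | FAnd of form A & form A
  | FOr of form A & form A
  | FImp of form A & form A.

Definition model (A : Type) := A -> bool.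

Fixpoint sat (A : Type) (v : model A) (f : form A) : bool :=
  match f with
  | FAtom a => v a
  | FBot => false
  | FNeg g => ~~ sat v g
  | FAnd g h => sat v g && sat v h
  | FOr g h => sat v g || sat v h
  | FImp g h => sat v g ==> sat v h
  end.

Definition tform (A : Type) (T : nat) := (form A * 'I_T)%type.

(* Finite multisets of time-indexed formulas, represented as sequences
   (all notions below are invariant under permutation). *)
Definition tmset (A : Type) (T : nat) := seq (tform A T).

Section Gen.
Variables (A : Type) (K T : nat) (m : 'I_K -> 'I_T -> model A).

Definition truth (k : 'I_K) (x : tform A T) : bool := sat (m k x.2) x.1.

Definition p_given (R : realType) (X : tmset A T) (k : 'I_K) (mu : R) : R :=
  \prod_(x <- X) (mu ^+ nat_of_bool (truth k x) * (1 - mu) ^+ (1 - nat_of_bool (truth k x))).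

Definition prior (R : realType) (k : 'I_K) : R := (K%:R)^-1.

Definition p_mu (R : realType) (Om : tmset A T) (mu : R) : R :=
  \sum_(k < K) p_given Om k mu * prior R k.

Definition pcond_mu (R : realType) (Om De : tmset A T) (mu : R) : R :=
  (\sum_(k < K) p_given Om k mu * p_given De k mu * prior R k) /
  (\sum_(k < K) p_given De k mu * prior R k).

Definition prob (R : realType) (Om : tmset A T) : R := lim (p_mu Om @ 1^'-).
Definition pcond (R : realType) (Om De : tmset A T) : R :=
  lim (pcond_mu Om De @ 1^'-).

Definition evidence (k : 'I_K) (X : tmset A T) : Prop := all (truth k) X.

Definition founded (X : tmset A T) : Prop := exists k, evidence k X.

(* Sub-multisets of Delta are given by masks: S = mask b Delta. *)
Definition is_MFS (De : tmset A T) (b : bitseq) : Prop :=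
  [/\ size b = size De,
      (0 < size (mask b De))%N,
      founded (mask b De) &
      forall b' : bitseq, (0 < size (mask b' De))%N -> founded (mask b' De) ->
        (size (mask b' De) <= size (mask b De))%N].

Definition in_Eprime (De : tmset A T) (k : 'I_K) : Prop :=
  exists b, is_MFS De b /\ evidence k (mask b De).

End Gen.

(* Main.v *)
Require Import Defs.
From HB Require Import structures.
From mathcomp Require Import all_boot all_order all_algebra.
From mathcomp Require Import all_classical all_reals all_analysis.
Import Order.TTheory GRing.Theory Num.Theory.
Import numFieldNormedType.Exports.
Local Open Scope classical_set_scope.
Local Open Scope ring_scope.

Lemma mask_norm (X : Type) (s : seq X) (b : bitseq) :
  exists b2, size b2 = size s /\ mask b2 s = mask b s.
Proof.
elim: s b => [|y s IH] b.
  exists (@nil bool); split=> //; by case: b.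
case: b => [|c b].
  by exists (nseq (size s).+1 false); rewrite size_nseq mask_false.
have [b2 [h1 h2]] := IH b.
by exists (c :: b2); rewrite /= h1 h2.
Qed.

Lemma mask_single (X : Type) (p : pred X) (s : seq X) :
  has p s -> exists b, [/\ size b = size s, (0 < size (mask b s))%N & all p (mask b s)].
Proof.
elim: s => [|y s IH] //= /orP [py|hs].
  by exists (true :: nseq (size s) false); rewrite /= size_nseq mask_false /= py.
have [b [h1 h2 h3]] := IH hs.
by exists (false :: b); rewrite /= h1.
Qed.

Lemma allfalse (A : Type) (K T : nat) (m : 'I_K -> 'I_T -> model A) (De : tmset A T) :
  (forall k : 'I_K, ~ in_Eprime m De k) ->
  forall k, ~~ has (truth m k) De.
Proof.
move=> hE k0; apply/negP => tx.
pose P n := [exists b : (size De).-tuple bool,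
  [&& (0 < size (mask b De))%N, [exists k, all (truth m k) (mask b De)]
   & size (mask b De) == n]].
have exP : exists n, P n.
  have [b [h1 h2 h3]] := @mask_single _ _ _ tx.
  have hb : size b == size De by apply/eqP.
  exists (size (mask b De)); apply/existsP; exists (Tuple hb) => /=.
  rewrite h2 eqxx andbT; apply/existsP; by exists k0.
have bnd : forall n, P n -> (n <= size De)%N.
  move=> n /existsP [b /and3P [_ _ /eqP <-]].
  by rewrite size_mask ?size_tuple //; apply: leq_trans (count_size _ _) _; rewrite size_tuple.
case: (ex_maxnP exP bnd) => i /existsP [b /and3P [h0 /existsP [k hk] /eqP hi]] hmax.
apply: (hE k); exists (val b); split => //; split => //.
- by rewrite size_tuple.
- by exists k.
move=> b' h0' [k' hk'].
have [b2 [h1 h2]] := @mask_norm _ De b'.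
have hb : size b2 == size De by apply/eqP.
rewrite -h2 hi; apply: hmax; apply/existsP; exists (Tuple hb) => /=.
rewrite h2 h0' /=; apply/andP; split => //; apply/existsP; by exists k'.
Qed.

Lemma p_given_false (R : realType) (A : Type) (K T : nat) (m : 'I_K -> 'I_T -> model A)
  (s : tmset A T) k (mu : R) :
  ~~ has (truth m k) s -> p_given m s k mu = (1 - mu) ^+ size s.
Proof.
elim: s => [|x s IH] /=; first by rewrite /p_given big_nil expr0.
rewrite negb_or => /andP [nx hs].
rewrite /p_given big_cons -/(p_given m s k mu) IH // (negbTE nx) /=.
by rewrite expr0 mul1r expr1 exprS.
Qed.

Lemma p_mu_cont (R : realType) (A : Type) (K T : nat) (m : 'I_K -> 'I_T -> model A)
  (Om : tmset A T) (x : R) : p_mu m Om @ x --> p_mu m Om x.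
Proof.
pose P : {poly R} := \sum_(k < K) (\prod_(y <- Om)
   ('X ^+ nat_of_bool (truth m k y) * (1 - 'X) ^+ (1 - nat_of_bool (truth m k y))))
   * ((K%:R : R)^-1)%:P.
have -> : p_mu m Om = horner P.
  apply: funext => z; rewrite /P /p_mu horner_sum; apply: eq_bigr => k _.
  rewrite hornerM hornerC horner_prod /p_given /prior; congr (_ * _).
  apply: eq_bigr => y _; rewrite hornerM !horner_exp hornerX hornerD hornerN hornerC ?hornerX //.
exact: continuous_horner.
Qed.

Theorem theorem2 (R : realType) (A : Type) (K T : nat) (hK : (1 <= K)%N) (hT : (1 <= T)%N)
  (m : 'I_K -> 'I_T -> model A) (Om De : tmset A T) :
  (forall k : 'I_K, ~ in_Eprime m De k) ->
  [/\ p_mu m Om @ (1 : R)^'- --> prob m R Om,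
      pcond_mu m Om De @ (1 : R)^'- --> pcond m R Om De &
      pcond m R Om De = prob m R Om].
Proof.
move=> hE.
have hf := @allfalse _ _ _ _ _ hE.
have c1 : p_mu m Om @ (1 : R)^'- --> p_mu m Om 1.
  by apply: cvg_at_left_filter; apply: p_mu_cont.
have hprob : prob m R Om = p_mu m Om 1 by apply: cvg_lim.
have heq : forall mu : R, mu != 1 -> pcond_mu m Om De mu = p_mu m Om mu.
  move=> mu mu1.
  rewrite /pcond_mu /p_mu.
  under eq_bigr => k _ do rewrite (@p_given_false _ _ _ _ _ _ _ _ (hf k)) mulrAC.
  under [X in _ / X]eq_bigr => k _ do rewrite (@p_given_false _ _ _ _ _ _ _ _ (hf k)).
  rewrite -mulr_sumr -mulr_suml /prior sumr_const card_ord.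
  have Kn0 : (K%:R : R) != 0 by rewrite pnatr_eq0 -lt0n.
  have cn0 : (1 - mu) ^+ size De != 0 by rewrite expf_neq0 // subr_eq0 eq_sym.
  have -> : (K%:R : R)^-1 *+ K = 1.
    by rewrite -(mulr_natr (K%:R : R)^-1) mulVf.
  by rewrite mulr1 mulfK.
have c2 : pcond_mu m Om De @ (1 : R)^'- --> p_mu m Om 1.
  apply: cvg_trans c1; apply: near_eq_cvg; near=> mu.
  rewrite heq // lt_eqF //; near: mu; exact: nbhs_left_lt.
have hpc : pcond m R Om De = p_mu m Om 1 by apply: cvg_lim.
by split; rewrite ?hprob ?hpc.
Unshelve. all: end_near.
Qed.
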